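(* Let $A=[\bm a_1,\dots,\bm a_n]$ be a $d\times n$ integer matrix of rank $d$ whose columns all lie on one affine hyperplane of $\mathbb{Q}^d$ not containing the origin, let $\bm w\in\mathbb{R}^n$ be a generic weight, let $\bm\beta\in\mathbb{C}^d$, and let $\bm v\in\mathbb{C}^n$ be a fake exponent of $H_A(\bm\beta)$ with respect to $\bm w$. If $I_{\bm 0}=\mathrm{nsupp}(\bm v)\subset C_{\bm w}$, then $I_{\bm 0}=K$.
   Context: $L=\ker_{\mathbb{Z}}A=\{\bm u\in\mathbb{Z}^n: A\bm u=\bm 0\}$. The toric ideal is $I_A=\langle \partial^{\bm u}-\partial^{\bm u'} : A\bm u=A\bm u',\ \bm u,\bm u'\in\mathbb{N}^n\rangle\subset\mathbb{C}[\partial_1,\dots,\partial_n]$ (multi-index notation). $H_A(\bm\beta)$ is the left ideal of the Weyl algebra $\mathbb{C}\langle x_1,\dots,x_n,\partial_1,\dots,\partial_n\rangle$ generated by $I_A$ and $\sum_j a_{ij}x_j\partial_j-\beta_i$ ($i=1,\dots,d$). A weight $\bm w$ is generic if the initial ideal $\mathrm{in}_{\bm w}I_A$ is a monomial ideal. Every $\bm u\in\mathbb{Z}^n$ is written uniquely as $\bm u=\bm u_+-\bm u_-$ with $\bm u_\pm\in\mathbb{N}^n$ of disjoint supports. For $\bm v\in\mathbb{C}^n$, $\bm u\in\mathbb{N}^n$, $[\bm v]_{\bm u}=\prod_j v_j(v_j-1)\cdots(v_j-u_j+1)$. A vector $\bm v$ is a fake exponent of $H_A(\bm\beta)$ with respect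 to $\bm w$ if $A\bm v=\bm\beta$ and $[\bm v]_{\bm u_+}=0$ for all $\bm u\in L$ with $\bm u_+\cdot\bm w>\bm u_-\cdot\bm w$. The negative support is $\mathrm{nsupp}(\bm v)=\{j: v_j\in\mathbb{Z}_{<0}\}$, and for $\bm u\in L$ one writes $I_{\bm u}=\mathrm{nsupp}(\bm v+\bm u)$. Let $\{\partial^{\bm g_+^{(i)}}-\partial^{\bm g_-^{(i)}}: i=1,\dots,m\}$ be the reduced Gröbner basis of $I_A$ with respect to $\bm w$, with $\partial^{\bm g_+^{(i)}}\in\mathrm{in}_{\bm w}I_A$, and put $\bm g^{(i)}=\bm g_+^{(i)}-\bm g_-^{(i)}$ and $C(\bm w)=\sum_{i=1}^m\mathbb{N}\bm g^{(i)}$. Define $\mathrm{NS}_{\bm w}(\bm v)$ as the set of those $I_{\bm u}$ ($\bm u\in L$) such that every $\bm u'\in L$ with $I_{\bm u'}=I_{\bm u}$ lies in $C(\bm w)$, and $K=\bigcap_{I\in\mathrm{NS}_{\bm w}(\bm v)}I$. A standard pair of a monomial ideal $M\subset\mathbb{C}[\bm\partial]$ is a pair $(\bm a,\sigma)$ with $\bm a\in\mathbb{N}^n$, $\sigma\subset\{1,\dots,n\}$ such that: (1) $a_i=0$ for $i\in\sigma$; (2) $\partial^{\bm a}\prod_{j\in\sigma}\partial_j^{b_j}\notin M$ for all $b_j\ge0$; (3) for every $l\notin\sigma$ there are $b_j\ge 0$ with $\partial^{\bm a}\partial_l^{b_l}\prod_{j\in\sigma}\partial_j^{b_j}\in M$.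 Let $\Delta_{\bm w}=\{\sigma : (\bm a,\sigma)\text{ a standard pair of }\mathrm{in}_{\bm w}I_A\}$ and $C_{\bm w}=\bigcap_{\sigma\in\Delta_{\bm w}}\sigma$. *)

(* Defs.v *)
From HB Require Import structures.
From mathcomp Require Import all_boot all_algebra.
From mathcomp Require Import reals.
From mathcomp.real_closed Require Import complex.
From mathcomp Require Import mpoly.

Set Implicit Arguments.
Unset Strict Implicit.
Unset Printing Implicit Defensive.

Import GRing.Theory Num.Theory.
Local Open Scope ring_scope.

Section PolyDefs.
Variables (F : comNzRingType) (n : nat).

Definition ideal_gen (S : {mpoly F[n]} -> Prop) (f : {mpoly F[n]}) : Prop :=
  exists k (c s : 'I_k -> {mpoly F[n]}),
    (forall i, S (s i)) /\ f = \sum_(i < k) c i * s i.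

Variable (R : numDomainType).

Definition mwt (w : 'I_n -> R) (m : 'X_{1..n}) : R :=
  \sum_(j < n) w j * (m j)%:R.

Definition in_w (w : 'I_n -> R) (f : {mpoly F[n]}) : {mpoly F[n]} :=
  \sum_(m <- msupp f | all (fun m' => mwt w m' <= mwt w m) (msupp f))
     f@_m *: 'X_[m].

Definition in_ideal (w : 'I_n -> R) (I : {mpoly F[n]} -> Prop) :
  {mpoly F[n]} -> Prop :=
  ideal_gen (fun g => exists f, I f /\ g = in_w w f).

Definition monomial_ideal (M : {mpoly F[n]} -> Prop) : Prop :=
  forall f, M f <-> ideal_gen (fun g => M g /\ exists m, g = 'X_[m]) f.

Definition reduced_GB (w : 'I_n -> R) (I : {mpoly F[n]} -> Prop)
  (k : nat) (G : 'I_k -> {mpoly F[n]}) : Prop :=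
  [/\ (forall i, I (G i)),
      (forall f, in_ideal w I f <->
                 ideal_gen (fun h => exists i, h = in_w w (G i)) f),
      (forall i, exists a, in_w w (G i) = 'X_[a]),
      (forall i j a b, i != j -> in_w w (G i) = 'X_[a] ->
                       in_w w (G j) = 'X_[b] -> ~~ (a <= b)%MM) &
      (forall i m, m \in msupp (G i) -> 'X_[m] != in_w w (G i) ->
                   ~ in_ideal w I 'X_[m])].

Definition std_pair (M : {mpoly F[n]} -> Prop) (a : 'X_{1..n})
  (sigma : {set 'I_n}) : Prop :=
  [/\ (forall i, i \in sigma -> a i = 0%N),
      (forall b : 'X_{1..n}, (forall j, j \notin sigma -> b j = 0%N) ->
          ~ M 'X_[a + b]) &
      (forall l, l \notin sigma -> exists b : 'X_{1..n},
          (forall j, j \notin sigma -> j != l -> b j = 0%N) /\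
          M 'X_[a + b])].

Definition in_Cw (M : {mpoly F[n]} -> Prop) (j : 'I_n) : Prop :=
  forall a sigma, std_pair M a sigma -> j \in sigma.

End PolyDefs.

Section ToricDefs.
Variables (d n : nat) (A : 'M[int]_(d, n)).

Definition mvec (m : 'X_{1..n}) : 'cV[int]_n := \col_j (m j)%:Z.

Definition toric_ideal (F : comNzRingType) : {mpoly F[n]} -> Prop :=
  ideal_gen (fun g => exists u u' : 'X_{1..n},
                 A *m mvec u = A *m mvec u' /\ g = 'X_[u] - 'X_[u']).

Definition generic (F : comNzRingType) (R : numDomainType)
  (w : 'I_n -> R) : Prop :=
  monomial_ideal (in_ideal w (@toric_ideal F)).

Definition inL (u : 'cV[int]_n) : Prop := A *m u = 0.

Definition upos (u : 'cV[int]_n) : 'X_{1..n} :=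
  [multinom absz (Num.max (u j ord0) 0) | j < n].
Definition uneg (u : 'cV[int]_n) : 'X_{1..n} :=
  [multinom absz (Num.max (- u j ord0) 0) | j < n].

Variable (C : numClosedFieldType).

Definition ffact (v : 'cV[C]_n) (m : 'X_{1..n}) : C :=
  \prod_(j < n) \prod_(k < m j) (v j ord0 - k%:R).

Definition fake_exponent (R : realDomainType) (w : 'I_n -> R)
  (beta : 'cV[C]_d) (v : 'cV[C]_n) : Prop :=
  map_mx (fun z : int => z%:~R) A *m v = beta /\
  forall u, inL u -> mwt w (uneg u) < mwt w (upos u) -> ffact v (upos u) = 0.

Definition negint (x : C) : Prop := exists k : nat, x = - (k.+1)%:R.

Definition nsupp (v : 'cV[C]_n) (j : 'I_n) : Prop := negint (v j ord0).

Definition Iu (v : 'cV[C]_n) (u : 'cV[int]_n) : 'I_n -> Prop :=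
  nsupp (v + map_mx (fun z : int => z%:~R) u).

Definition in_Cone (k : nat) (gp gm : 'I_k -> 'X_{1..n}) (u : 'cV[int]_n) :
  Prop :=
  exists c : 'I_k -> nat, u = \sum_(i < k) (c i)%:Z *: (mvec (gp i) - mvec (gm i)).

Definition inNS (v : 'cV[C]_n) (k : nat) (gp gm : 'I_k -> 'X_{1..n})
  (P : 'I_n -> Prop) : Prop :=
  exists u, [/\ inL u, (forall j, P j <-> Iu v u j) &
    (forall u', inL u' -> (forall j, Iu v u' j <-> Iu v u j) ->
                in_Cone gp gm u')].

Definition Kset (v : 'cV[C]_n) (k : nat) (gp gm : 'I_k -> 'X_{1..n})
  (j : 'I_n) : Prop :=
  forall P, inNS v gp gm P -> P j.

End ToricDefs.
Arguments toric_ideal {d n} A F.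

(* Main.v *)
Require Import Defs.
From HB Require Import structures.
From mathcomp Require Import all_boot all_algebra.
From mathcomp Require Import reals.
From mathcomp.real_closed Require Import complex.
From mathcomp Require Import mpoly.
From mathcomp Require Import zify.
From Stdlib Require Import Classical.
Import GRing.Theory Num.Theory.
Local Open Scope ring_scope.
Set Implicit Arguments.
Unset Strict Implicit.
Unset Printing Implicit Defensive.

Section Ideals.
Variables (F : comNzRingType) (n : nat).
Implicit Types (S : {mpoly F[n]} -> Prop) (f : {mpoly F[n]}).

Lemma ideal_gen_mono S S' f :
  (forall g, S g -> S' g) -> ideal_gen S f -> ideal_gen S' f.
Proof.
by move=> hS [k [c [s [hs ->]]]]; exists k, c, s; split => // i; apply: hS.
Qed.

Lemma ideal_gen_mull S f p : ideal_gen S f -> ideal_gen S (p * f).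
Proof.
move=> [k [c [s [hs ->]]]]; exists k, (fun i => p * c i), s; split => //.
by rewrite mulr_sumr; apply: eq_bigr => i _; rewrite mulrA.
Qed.

Lemma ideal_gen_gen S g : S g -> ideal_gen S g.
Proof.
move=> hg; exists 1%N, (fun _ => 1), (fun _ => g); split => //.
by rewrite big_ord1 mul1r.
Qed.

Lemma ideal_gen_monom k (g : 'I_k -> 'X_{1..n}) f m :
  ideal_gen (fun h => exists i, h = 'X_[g i]) f -> f@_m != 0 ->
  exists i, (g i <= m)%MM.
Proof.
move=> [k' [c [s [hs ->]]]].
case: (boolP [exists i, (g i <= m)%MM]) => [/existsP [i hi] _|/existsPn hn].
  by exists i.
rewrite raddf_sum big1 ?eqxx // => i _.
have [j ->] := hs i.
apply/eqP; rewrite mcoeff_eq0; apply/negP => hin.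
have := hin; rewrite (perm_mem (msuppMX _ _)) => /mapP [m' _ hm].
by move: (hn j); rewrite hm lem_addr.
Qed.

Lemma ideal_gen_monoX k (g : 'I_k -> 'X_{1..n}) m :
  ideal_gen (fun h => exists i, h = 'X_[g i]) ('X_[m] : {mpoly F[n]}) ->
  exists i, (g i <= m)%MM.
Proof.
move=> h; have := ideal_gen_monom h; apply; rewrite mcoeffX eqxx; exact: oner_neq0.
Qed.

End Ideals.

Section Toric.
Variables (F : numFieldType) (d n : nat) (A : 'M[int]_(d, n)).

Definition ev (k0 : 'I_d) (j : 'I_n) : F := (2%:R : F) ^ (A k0 j).

Lemma two_neq0 : (2%:R : F) != 0. Proof. by rewrite pnatr_eq0. Qed.

Lemma meval_ev u k0 : meval (ev k0) ('X_[u] : {mpoly F[n]}) = (2%:R : F) ^ ((A *m mvec u) k0 0).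
Proof.
rewrite mevalX /ev mxE.
under eq_bigr => j _ do rewrite exprnP exprz_exp.
under [in RHS]eq_bigr => j _ do rewrite /mvec mxE.
symmetry.
apply: (big_morph (fun z : int => (2%:R : F) ^ z)).
  by move=> x y; rewrite expfzDr // two_neq0.
by rewrite expr0z.
Qed.

Lemma toric_meval f k0 : toric_ideal A F f -> meval (ev k0) f = 0.
Proof.
move=> [k [c [s [hs ->]]]].
rewrite raddf_sum big1 // => i _ /=; rewrite mevalM.
have [u [u' [hu ->]]] := hs i.
by rewrite mevalB !meval_ev hu subrr mulr0.
Qed.

Lemma toric_binom u u' : toric_ideal A F ('X_[u] - 'X_[u']) ->
  A *m mvec u = A *m mvec u'.
Proof.
move=> h; apply/matrixP => k0 j; rewrite (ord1 j).
have := toric_meval k0 h; rewrite mevalB !meval_ev => /eqP; rewrite subr_eq0 => /eqP e.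
have : (2%:R : F) ^ ((A *m mvec u) k0 0 - (A *m mvec u') k0 0) = 1.
  by rewrite expfzDr ?two_neq0 // -invr_expz e divff // expfz_neq0 // two_neq0.
move/eqP; rewrite pexprz_eq1 ?ler0n // (_ : (2%:R : F) == 1 = false).
  by rewrite orbF subr_eq0 => /eqP.
by apply/negbTE; rewrite (eqr_nat F 2 1).
Qed.

Lemma toric_gen u u' : A *m mvec u = A *m mvec u' ->
  toric_ideal A F ('X_[u] - 'X_[u']).
Proof. by move=> e; apply: ideal_gen_gen; exists u, u'. Qed.

End Toric.
Section InW.
Variables (F : comNzRingType) (n : nat) (R : numDomainType).

Lemma sum_seq_delta (T : eqType) (s : seq T) (G : T -> F) m :
  uniq s -> \sum_(x <- s) G x * (x == m)%:R = if m \in s then G m else 0.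
Proof.
move=> us; case: ifP => hm.
  rewrite (big_rem m) //= eqxx mulr1 big1_seq ?addr0 // => x /andP [_ hx].
  have : x != m by apply/eqP => e; move: hx; rewrite e mem_rem_uniqF.
  by move/negPf => ->; rewrite mulr0.
rewrite big1_seq // => x /andP [_ hx].
have : x != m by apply/eqP => e; move: hx; rewrite e hm.
by move/negPf => ->; rewrite mulr0.
Qed.

Lemma in_w_coef (w : 'I_n -> R) (f : {mpoly F[n]}) m :
  (in_w w f)@_m = if (m \in msupp f) && all (fun m' => mwt w m' <= mwt w m) (msupp f)
                  then f@_m else 0.
Proof.
rewrite /in_w raddf_sum /=.
under eq_bigr => x _ do rewrite mcoeffZ mcoeffX.
rewrite -big_filter sum_seq_delta ?filter_uniq ?msupp_uniq //.
by rewrite mem_filter andbC.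
Qed.

End InW.

Section Lead.
Variables (F : numFieldType) (n : nat) (R : realDomainType) (w : 'I_n -> R).

Lemma lead_binom (p q : 'X_{1..n}) :
  (exists a, in_w w ('X_[p] - 'X_[q] : {mpoly F[n]}) = 'X_[a]) ->
  in_w w ('X_[p] - 'X_[q] : {mpoly F[n]}) = 'X_[p] /\ mwt w q < mwt w p.
Proof.
move=> [a ea].
have ca := f_equal (mcoeff a) ea.
rewrite in_w_coef mcoeffX eqxx in ca.
move: ca; case: ifP => [_|_]; last by move/eqP; rewrite eq_sym oner_eq0.
rewrite mcoeffB !mcoeffX => h1.
have hpa : p = a.
  apply/eqP; move: h1; case: eqP => // _; case: (q == a) => /=; rewrite ?sub0r ?subr0.
    by move/eqP; rewrite eq_sym -addr_eq0 -mulr2n pnatr_eq0.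
  by rewrite oppr0 => /eqP; rewrite eq_sym oner_eq0.
subst a; move: h1; rewrite eqxx => /eqP; rewrite subr_eq addrC -subr_eq subrr eq_sym.
rewrite pnatr_eq0 eqb0 => hqp.
split=> //.
have cq := f_equal (mcoeff q) ea.
have hpq : (p == q) = false by rewrite eq_sym (negbTE hqp).
rewrite in_w_coef mcoeffX mcoeffB !mcoeffX eqxx hpq in cq.
move: cq; rewrite sub0r; case: ifP => [_|]; first by move/eqP; rewrite oppr_eq0 oner_eq0.
move=> /negbT; rewrite negb_and => /orP [].
  by rewrite mcoeff_msupp mcoeffB !mcoeffX eqxx hpq sub0r oppr_eq0 oner_eq0.
move=> /allPn [m' hm' hlt] _.
move: hm'; rewrite mcoeff_msupp mcoeffB !mcoeffX.
case: (eqVneq p m') => [e|hpm]; first by move=> _; rewrite e order.Order.TotalTheory.ltNge.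
case: (eqVneq q m') => [e|hqm]; first by rewrite -e order.Order.POrderTheory.lexx in hlt.
by rewrite subrr eqxx.
Qed.

End Lead.

Section Main.
Variables (R : realType) (d n : nat) (A : 'M[int]_(d, n)) (w : 'I_n -> R)
  (m : nat) (gp gm : 'I_m -> 'X_{1..n}).
Hypothesis hGB : reduced_GB w (toric_ideal A R[i]) (fun i => 'X_[gp i] - 'X_[gm i]).
Local Notation M := (in_ideal w (toric_ideal A R[i])).

Lemma GB_lead i : in_w w ('X_[gp i] - 'X_[gm i] : {mpoly R[i][n]}) = 'X_[gp i]
   /\ mwt w (gm i) < mwt w (gp i).
Proof. case: hGB => _ _ h3 _ _; exact: lead_binom (h3 i). Qed.

Lemma M_iff f : M f <-> ideal_gen (fun h => exists i, h = 'X_[gp i]) f.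
Proof.
case: hGB => _ h2 _ _ _; rewrite h2; split; apply: ideal_gen_mono => g [i ->];
  exists i; by rewrite (GB_lead i).1.
Qed.

Lemma M_coef f e : M f -> f@_e != 0 -> exists i, (gp i <= e)%MM.
Proof. by move/M_iff => h; apply: ideal_gen_monom h. Qed.

Lemma M_monoX e : M 'X_[e] -> exists i, (gp i <= e)%MM.
Proof. by move/M_iff => h; apply: ideal_gen_monoX h. Qed.

Lemma M_gp i : M 'X_[gp i].
Proof. by apply/M_iff; apply: ideal_gen_gen; exists i. Qed.

Lemma M_le e e' : M 'X_[e] -> (e <= e')%MM -> M 'X_[e'].
Proof.
move=> h le; rewrite -(submK le) mpolyXD; exact: ideal_gen_mull.
Qed.

Lemma GB_hom i : A *m mvec (gp i) = A *m mvec (gm i).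
Proof. case: hGB => h1 _ _ _ _; exact: toric_binom (h1 i). Qed.

Lemma GB_min i j : i != j -> ~~ (gp i <= gp j)%MM.
Proof.
case: hGB => _ _ _ h4 _ => hij; apply: (h4 i j) => //; exact: (GB_lead _).1.
Qed.

End Main.

Section Deg.
Variables (d n : nat) (A : 'M[int]_(d, n)).
Hypothesis hhyp : exists (h : 'rV[rat]_d) (c : rat),
            c != 0 /\ forall j, h *m col j (map_mx (fun z : int => z%:~R) A) = c%:M.

Lemma deg_hom u u' : A *m mvec u = A *m mvec u' -> mdeg u = mdeg u'.
Proof.
case: hhyp => h [c [c0 hc]] e.
have key : forall x : 'X_{1..n},
  \sum_k h 0 k * ((A *m mvec x) k 0)%:~R = c * (mdeg x)%:R.
  move=> x.
  under eq_bigr => k _ do rewrite mxE rmorph_sum mulr_sumr.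
  rewrite exchange_big mdegE natr_sum mulr_sumr /=.
  apply: eq_bigr => j _.
  have := congr1 (fun N : 'M[rat]_1 => N 0 0) (hc j); rewrite !mxE eqxx mulr1n => <-.
  rewrite mulr_suml; apply: eq_bigr => k _.
  by rewrite !mxE rmorphM /= mulrA.
have := key u; rewrite e key => /(mulfI c0) /eqP.
by rewrite eqr_nat => /eqP.
Qed.

End Deg.

Section Cone.
Variables (n m : nat) (gp gm : 'I_m -> 'X_{1..n}).

Lemma cone0 : in_Cone gp gm 0.
Proof. by exists (fun _ => 0%N); rewrite big1 // => i _; rewrite scale0r. Qed.

Lemma coneDg x i : in_Cone gp gm x -> in_Cone gp gm (x + (mvec (gp i) - mvec (gm i))).
Proof.
move=> [c ->]; exists (fun j => (c j + (j == i))%N).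
under [RHS]eq_bigr => j _ do rewrite PoszD scalerDl.
rewrite big_split /=; congr (_ + _).
rewrite (bigD1 i) //= eqxx scale1r big1 ?addr0 // => j /negPf ->.
by rewrite scale0r.
Qed.

Lemma mvecD (a b : 'X_{1..n}) : mvec (a + b)%MM = mvec a + mvec b.
Proof. by apply/matrixP => i j; rewrite !mxE mnmDE PoszD. Qed.

Lemma mvecB (a b : 'X_{1..n}) : (b <= a)%MM -> mvec (a - b)%MM = mvec a - mvec b.
Proof.
by move/mnm_lepP => h; apply/matrixP => i j; rewrite !mxE mnmBE subzn.
Qed.

Variable (R : realDomainType).
Lemma mwtD (w : 'I_n -> R) (a b : 'X_{1..n}) : mwt w (a + b)%MM = mwt w a + mwt w b.
Proof.
by rewrite /mwt -big_split; apply: eq_bigr => j _; rewrite mnmDE natrD mulrDr.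
Qed.

End Cone.

Section Reduce.
Variables (R : realType) (d n : nat) (A : 'M[int]_(d, n)) (w : 'I_n -> R)
  (m : nat) (gp gm : 'I_m -> 'X_{1..n}).
Hypothesis hGB : reduced_GB w (toric_ideal A R[i]) (fun i => 'X_[gp i] - 'X_[gm i]).
Hypothesis hhyp : exists (h : 'rV[rat]_d) (c : rat),
            c != 0 /\ forall j, h *m col j (map_mx (fun z : int => z%:~R) A) = c%:M.

Lemma step e i : (gp i <= e)%MM ->
  let e' := (e - gp i + gm i)%MM in
  [/\ mdeg e' = mdeg e, mwt w e' < mwt w e, A *m mvec e' = A *m mvec e
    & mvec e' = mvec e - mvec (gp i) + mvec (gm i)].
Proof.
move=> hi e'.
have hme : mvec e' = mvec e - mvec (gp i) + mvec (gm i).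
  by rewrite /e' mvecD mvecB.
split => //.
- by rewrite /e' mdegD -{2}(submK hi) mdegD (deg_hom hhyp (GB_hom hGB i)).
- rewrite /e' mwtD -{2}(submK hi) mwtD ltrD2l; exact: (GB_lead hGB i).2.
- by rewrite hme mulmxDr mulmxBr (GB_hom hGB i) subrK.
Qed.

Lemma reduce N : forall (k : nat) (e : 'X_{1..n}), (#|[set b : 'X_{1..n < N} | (mwt w (val b) < mwt w e)%R]| <= k)%N ->
  (mdeg e < N)%N -> exists c,
  [/\ A *m mvec c = A *m mvec e, in_Cone gp gm (mvec e - mvec c)
    & forall i, ~~ (gp i <= c)%MM].
Proof.
pose S (x : 'X_{1..n}) := [set b : 'X_{1..n < N} | mwt w (val b) < mwt w x].
elim=> [|k IH] e hle hN;
  (case: (boolP [exists i, (gp i <= e)%MM]) => [/existsP [i hi]|/existsPn hn];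
    last by exists e; split => //; rewrite subrr; exact: cone0);
  have [hdeg hwt hA hme] := step hi;
  set e' := (e - gp i + gm i)%MM in hdeg hwt hA hme;
  (have hN' : (mdeg e' < N)%N by rewrite hdeg);
  (have hprop : S e' \proper S e by
    apply/properP; split;
    [apply/subsetP => b; rewrite !inE => hb; exact: order.Order.POrderTheory.lt_trans hb hwt
    |exists (BMultinom hN'); rewrite !inE //= order.Order.POrderTheory.ltxx]).
  by have := leq_trans (proper_card hprop) hle.
have [c [hc1 hc2 hc3]] := IH e' (leq_trans (proper_card hprop) hle) hN'.
exists c; split => //; first by rewrite hc1.
have := coneDg i hc2; congr in_Cone.
rewrite hme; apply/matrixP => a b; rewrite !mxE; lia.
Qed.

End Reduce.

Section PartB.
Variables (R : realType) (d n : nat) (A : 'M[int]_(d, n)) (w : 'I_n -> R)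
  (m : nat) (gp gm : 'I_m -> 'X_{1..n}).
Hypothesis hGB : reduced_GB w (toric_ideal A R[i]) (fun i => 'X_[gp i] - 'X_[gm i]).
Local Notation M := (in_ideal w (toric_ideal A R[i])).

Lemma gp_zero j : in_Cw M j -> forall i, gp i j = 0%N.
Proof.
move=> hCj i; apply/eqP; rewrite -leqn0 leqNgt; apply/negP => hpos.
pose c := [multinom (if l == j then 0%N else gp i l) | l < n].
pose a (s : {set 'I_n}) := [multinom (if l \in s then 0%N else c l) | l < n].
pose P (s : {set 'I_n}) := j \notin s /\ forall b : 'X_{1..n},
   (forall l, l \notin s -> b l = 0%N) -> ~ M 'X_[(a s + b)%MM].
have P0 : P set0.
  split; first by rewrite inE.
  move=> b hb; have -> : (a set0 + b)%MM = c.
    by apply/mnmP => l; rewrite !mnmE hb ?inE // addn0.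
  move/(M_monoX hGB) => [k hk].
  have hci : (c <= gp i)%MM.
    by apply/mnm_lepP => l; rewrite mnmE; case: ifP.
  case: (eqVneq k i) => [ek|nki].
    subst k; move/mnm_lepP: hk => /(_ j); rewrite mnmE eqxx leqn0 => /eqP h.
    by rewrite h in hpos.
  by move: (GB_min hGB nki); rewrite (lepm_trans hk hci).
have [s [Ps Pmax]] : exists s, P s /\ forall l, l \notin s -> l != j -> ~ P (l |: s).
  have : forall k s, P s -> (#|~: s| <= k)%N ->
      exists s, P s /\ forall l, l \notin s -> l != j -> ~ P (l |: s).
    elim=> [|k IH] s0 Ps0 hk.
      exists s0; split => // l hl; move: hk; rewrite leqn0 => /eqP /cards0_eq hs.
      by move: hl; rewrite -in_setC hs inE.
    case: (classic (forall l, l \notin s0 -> l != j -> ~ P (l |: s0))) => [h|h].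
      by exists s0.
    move: h => /not_all_ex_not [l h].
    have hl : l \notin s0 by apply: NNPP => hl; apply: h => hl'; case: (hl hl').
    have hlj : l != j by apply: NNPP => hlj; apply: h => _ hlj'; case: (hlj hlj').
    have Pl : P (l |: s0) by apply: NNPP => hP; apply: h => _ _; exact: hP.
    apply: (IH _ Pl); rewrite -ltnS; apply: leq_trans hk.
    apply: proper_card; apply/properP; split.
      by apply/subsetP => x; rewrite !inE negb_or => /andP [].

    by exists l; rewrite !inE ?eqxx //=.
  by move/(_ #|~: set0| set0 P0 (leqnn _)).
have std : std_pair M (a s) s.
  split.
  - by move=> l hl; rewrite mnmE hl.
  - exact: Ps.2.
  move=> l hl; case: (eqVneq l j) => [elj|nlj].
    subst l.
    exists [multinom (if l' \in s then gp i l' else if l' == j then gp i l' else 0%N) | l' < n].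
    split.
      by move=> j' hj' nj; rewrite mnmE (negbTE hj') (negbTE nj).
    suff -> : (a s + [multinom (if l' \in s then gp i l' else if l' == j then gp i l' else 0%N) | l' < n])%MM = gp i.
      exact: (M_gp hGB).
    apply/mnmP => l'; rewrite !mnmE; case: ifP => //= _; case: ifP => //= _.
    by rewrite addn0.
  have nP := Pmax l hl nlj.
  have hjs : j \notin l |: s by rewrite !inE negb_or eq_sym nlj Ps.1.
  have : ~ (forall b : 'X_{1..n},
      (forall l', l' \notin l |: s -> b l' = 0%N) -> ~ M 'X_[(a (l |: s) + b)%MM]).
    by move=> h; apply: nP; split.
  move=> /not_all_ex_not [b hb].
  have hsupp : forall l', l' \notin l |: s -> b l' = 0%N.
    by apply: NNPP => hs; apply: hb => hs'; case: (hs hs').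
  have hM : M 'X_[(a (l |: s) + b)%MM] by apply: NNPP => hM; apply: hb => _; exact: hM.
  exists b; split.
    by move=> j' hj' nj; apply: hsupp; rewrite !inE negb_or hj' andbT.
  apply: (M_le hM); apply/mnm_lepP => l'; rewrite !mnmE leq_add2r.
  by rewrite !inE; case: (l' == l); case: (l' \in s).
by move: (hCj _ _ std); apply/negP; exact: Ps.1.
Qed.

End PartB.

Section Binom.
Variables (F : numFieldType) (n : nat) (R : realDomainType) (w : 'I_n -> R).

Lemma binom_in_w_coef (p q mx : 'X_{1..n}) : p != q -> (mx == p) || (mx == q) ->
  mwt w p <= mwt w mx -> mwt w q <= mwt w mx ->
  (in_w w ('X_[p] - 'X_[q] : {mpoly F[n]}))@_mx != 0.
Proof.
move=> npq hmx hp hq.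
have cf : ('X_[p] - 'X_[q] : {mpoly F[n]})@_mx != 0.
  rewrite mcoeffB !mcoeffX; case/orP: hmx => /eqP ->.
    by rewrite eqxx [q == p]eq_sym (negbTE npq) subr0 oner_eq0.
  by rewrite eqxx (negbTE npq) sub0r oppr_eq0 oner_eq0.
rewrite in_w_coef ifT //; apply/andP; split; first by rewrite mcoeff_msupp.
apply/allP => m' hm'; move: hm'; rewrite mcoeff_msupp mcoeffB !mcoeffX.
case: (eqVneq p m') => [<-|]; first by rewrite hp.
case: (eqVneq q m') => [<-|]; first by rewrite hq.
by move=> _ _; rewrite subrr eqxx.
Qed.

End Binom.

Section NegInt.
Variable (C : numClosedFieldType).

Lemma nat_negint (t : nat) : ~ negint (t%:R : C).
Proof.
move=> [k /eqP]; rewrite -subr_eq0 opprK -natrD pnatr_eq0 addnS //.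
Qed.

Lemma negint_addz (x : C) (z : int) : negint x -> (z <= 0)%R -> negint (x + z%:~R).
Proof.
move=> [k ->] hz.
have [t ->] : exists t : nat, z = - t%:Z by exists (absz z); lia.
exists (k + t)%N.
rewrite rmorphN /= -pmulrn -addSn natrD opprD //.
Qed.

Lemma negint_sub (t U : nat) : (t < U)%N -> negint (t%:R - U%:R : C).
Proof.
move=> h; exists (U - t).-1; rewrite prednK ?subn_gt0 // natrB ?(ltnW h) //.
by rewrite opprB.
Qed.

End NegInt.

Section PartA.
Variables (R : realType) (d n : nat) (A : 'M[int]_(d, n)) (w : 'I_n -> R)
  (m : nat) (gp gm : 'I_m -> 'X_{1..n}).
Hypothesis hGB : reduced_GB w (toric_ideal A R[i]) (fun i => 'X_[gp i] - 'X_[gm i]).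
Hypothesis hhyp : exists (h : 'rV[rat]_d) (c : rat),
            c != 0 /\ forall j, h *m col j (map_mx (fun z : int => z%:~R) A) = c%:M.
Variables (beta : 'cV[R[i]]_d) (v : 'cV[R[i]]_n).
Hypothesis hv : fake_exponent A w beta v.
Local Notation M := (in_ideal w (toric_ideal A R[i])).

Lemma IuE (u : 'cV[int]_n) j : Iu v u j <-> negint (v j 0 + (u j 0)%:~R).
Proof. by rewrite /Iu /nsupp !mxE. Qed.

Lemma partA u' : inL A u' -> (forall j, Iu v u' j <-> nsupp v j) -> in_Cone gp gm u'.
Proof.
move=> hL hI.
set p := upos u'; set q := uneg u'.
have hu' : u' = mvec p - mvec q.
  apply/matrixP => a b; have -> : b = ord0 by apply/val_inj; case: b => [[]]. 
  rewrite !mxE /p /q !mnmE; lia.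
have hApq : A *m mvec p = A *m mvec q.
  by apply/eqP; rewrite -subr_eq0 -mulmxBr -hu'; apply/eqP; exact: hL.
have hq : forall k, ~~ (gp k <= q)%MM.
  move=> k; apply/negP => hk.
  set g := mvec (gp k) - mvec (gm k).
  have hLg : inL A g by rewrite /inL /g mulmxBr (GB_hom hGB k) subrr.
  have E : (upos g + gm k = uneg g + gp k)%MM.
    by apply/mnmP => l; rewrite !mnmE /g !mxE; lia.
  have E' := congr1 (mwt w) E; rewrite !mwtD in E'.
  have hw : mwt w (uneg g) < mwt w (upos g).
    by rewrite -(ltrD2r (mwt w (gp k))) -E' ltrD2l; exact: (GB_lead hGB k).2.
  have /eqP := hv.2 g hLg hw; rewrite /ffact => /prodf_eq0 [j _ /prodf_eq0 [t _]].
  rewrite subr_eq0 => /eqP hvj.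
  have ht : (t < q j)%N.
    apply: (leq_trans (ltn_ord t)); apply: leq_trans (mnm_lepP hk j).
    by rewrite /g !mnmE !mxE; lia.
  have : nsupp v j.
    apply/hI/IuE; rewrite hvj.
    have -> : u' j 0 = - (q j)%:Z.
      have : (0 < q j)%N by apply: leq_ltn_trans ht.
      have -> : (0 : 'I_1) = ord0 by apply/val_inj.
      by rewrite /q mnmE; lia.
    rewrite rmorphN /= -pmulrn; exact: negint_sub.
  by rewrite /nsupp hvj; exact: nat_negint.
have [c [hc1 hc2 hc3]] := reduce hGB hhyp (leqnn _) (ltnSn (mdeg p)).
case: (eqVneq c q) => [ecq|ncq]; first by rewrite hu' -ecq.
exfalso.
have hA : A *m mvec c = A *m mvec q by rewrite hc1.
have hf : M (in_w w ('X_[c] - 'X_[q])).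
  by apply: ideal_gen_gen; exists ('X_[c] - 'X_[q]); split => //; exact: toric_gen.
case: (lerP (mwt w q) (mwt w c)) => hle.
  have := @binom_in_w_coef R[i] _ _ w c q c ncq; rewrite eqxx /= => /(_ isT (order.Order.POrderTheory.lexx _) hle).
  move=> /(M_coef hGB hf) [k hk].
  by move: (hc3 k); rewrite hk.
have := @binom_in_w_coef R[i] _ _ w c q q ncq; rewrite eqxx orbT => /(_ isT (order.Order.POrderTheory.ltW hle) (order.Order.POrderTheory.lexx _)).
move=> /(M_coef hGB hf) [k hk].
by move: (hq k); rewrite hk.
Qed.

End PartA.

Unset Implicit Arguments.

Theorem theorem3p1 (R : realType) (d n : nat) (A : 'M[int]_(d, n))
  (hrank : \rank (map_mx (fun z : int => (z%:~R : rat)) A) = d)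
  (hhyp : exists (h : 'rV[rat]_d) (c : rat),
            c != 0 /\ forall j, h *m col j (map_mx (fun z : int => z%:~R) A) = c%:M)
  (w : 'I_n -> R) (hgen : generic A R[i] w)
  (beta : 'cV[R[i]]_d) (v : 'cV[R[i]]_n) (hv : fake_exponent A w beta v)
  (m : nat) (gp gm : 'I_m -> 'X_{1..n})
  (hGB : reduced_GB w (toric_ideal A R[i]) (fun i => 'X_[gp i] - 'X_[gm i]))
  (hlead : forall i, in_ideal w (toric_ideal A R[i]) 'X_[gp i])
  (hC : forall j, nsupp v j -> in_Cw (in_ideal w (toric_ideal A R[i])) j) :
  forall j, nsupp v j <-> Kset A v gp gm j.
Proof.
have Iu0 : forall j, Iu v 0 j <-> nsupp v j.
  by move=> j; rewrite IuE /nsupp mxE rmorph0 addr0.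
move=> j; split.
- move=> hj P [u [hL hP hall]].
  have [c hc] := hall u hL (fun _ => iff_refl _).
  apply/hP/IuE; apply: negint_addz => //.
  rewrite hc summxE; apply: sumr_le0 => i _.
  rewrite !mxE (gp_zero hGB (hC j hj)) sub0r mulrN oppr_le0.
  exact: mulr_ge0.
- move=> hK; apply: (hK (nsupp v)); exists 0; split.
  + by rewrite /inL mulmx0.
  + by move=> j'; rewrite Iu0.
  + move=> u' hL' hI; apply: (partA hGB hhyp hv hL') => j'; rewrite hI; exact: Iu0.
Qed.
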